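(* Let $G$ be a graph on $d+2$ vertices with adjacency matrix $A_G$ having eigenvalues $\lambda_1\geq\lambda_2\geq\dots\geq\lambda_{d+2}$, and let $k>1$ with $\overline{B_G}=\frac{1}{k^2-1}I-A_G$. Suppose that $w^T\overline{B_G}w\geq 0$ for all $w\in\mathbf{1}^\perp$, that there exist a nonzero $w\in\mathbf{1}^\perp$ and a real $\gamma$ with $\overline{B_G}w=\gamma\mathbf{1}$, and that $\det(\overline{B_G})=0$. Then there exists an eigenvector $v_2$ of $A_G$ with eigenvalue $\lambda_2$ that is orthogonal to $\mathbf{1}$.
   Context: Graphs are finite and simple; $\mathbf{1}$ is the all-ones vector and $\mathbf{1}^\perp$ its orthogonal complement. *)

(* Defs.v *)
From HB Require Import structures.
From mathcomp Require Import all_boot all_order all_algebra.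
From mathcomp Require Import reals.
Set Implicit Arguments. Unset Strict Implicit. Unset Printing Implicit Defensive.
Import Order.TTheory GRing.Theory Num.Theory.
Local Open Scope ring_scope.

Definition simple_graph (n : nat) (e : rel 'I_n) : Prop :=
  symmetric e /\ irreflexive e.

Definition adjmx (R : nzRingType) (n : nat) (e : rel 'I_n) : 'M[R]_n :=
  \matrix_(i, j) (e i j)%:R.

Definition ones (R : nzRingType) (n : nat) : 'cV[R]_n := const_mx 1.

Definition orth_ones (R : nzRingType) (n : nat) (w : 'cV[R]_n) : Prop :=
  (ones R n)^T *m w = 0.

Definition eigenvalues_desc (R : realType) (n : nat) (A : 'M[R]_n)
  (lam : seq R) : Prop :=
  sorted (>=%R) lam /\ char_poly A = \prod_(x <- lam) ('X - x%:P).

(* Main.v *)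
Require Import Defs.
From HB Require Import structures.
From mathcomp Require Import all_boot all_order all_algebra.
From mathcomp Require Import reals ring lra.
Import Order.TTheory GRing.Theory Num.Theory.
Local Open Scope ring_scope.

Section Aux.
Context {R : realType}.

Lemma dotrE n (x y : 'rV[R]_n) : (x *m y^T) 0 0 = \sum_i x 0 i * y 0 i.
Proof. by rewrite !mxE; apply: eq_bigr => i _; rewrite mxE. Qed.

Lemma dotrC n (x y : 'rV[R]_n) : (x *m y^T) 0 0 = (y *m x^T) 0 0.
Proof. by rewrite !dotrE; apply: eq_bigr => i _; rewrite mulrC. Qed.

Lemma dotr_ge0 n (x : 'rV[R]_n) : 0 <= (x *m x^T) 0 0.
Proof. by rewrite dotrE; apply: sumr_ge0 => i _; rewrite -expr2 sqr_ge0. Qed.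

Lemma dotr_eq0 n (x : 'rV[R]_n) : (x *m x^T) 0 0 = 0 -> x = 0.
Proof.
rewrite dotrE => /eqP; rewrite psumr_eq0; last by move=> i _; rewrite -expr2 sqr_ge0.
move=> /allP H; apply/rowP => i; rewrite mxE.
by have /implyP/(_ isT) := H i (mem_index_enum _); rewrite mulf_eq0 orbb => /eqP.
Qed.

Lemma trmx_mul_eq0 n (M : 'M[R]_n) : M^T *m M = 0 -> M = 0.
Proof.
move=> H; apply/matrixP => k j; rewrite mxE.
have : (M^T *m M) j j = 0 by rewrite H mxE.
rewrite mxE => /eqP; rewrite psumr_eq0; last by move=> i _; rewrite mxE -expr2 sqr_ge0.
move=> /allP /(_ k (mem_index_enum _)) /=; rewrite mxE mulf_eq0 orbb.
by move/eqP.
Qed.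

Lemma sym_exp n (N : 'M[R]_n.+1) k : N^T = N -> (N ^+ k)^T = N ^+ k.
Proof.
move=> HN; elim: k => [|k IH]; first by rewrite expr0 tr_scalar_mx.
by rewrite exprS -mulmxE trmx_mul IH HN mulmxE -exprSr exprS.
Qed.

Lemma sym_horner n (A : 'M[R]_n.+1) p : A^T = A -> (horner_mx A p)^T = horner_mx A p.
Proof.
move=> HA; elim/poly_ind: p => [|p c IH]; first by rewrite rmorph0 trmx0.
rewrite rmorphD rmorphM /= horner_mx_X horner_mx_C linearD /= tr_scalar_mx.
rewrite -mulmxE trmx_mul IH HA; congr (_ + _).
by have := comm_horner_mx p (erefl (A *m A)); rewrite /comm_mx.
Qed.

Lemma sym_nilp n (N : 'M[R]_n.+1) k : N^T = N -> N ^+ k.+1 = 0 -> N = 0.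
Proof.
move=> HN; elim: k => [|k IH]; first by rewrite expr1.
move=> Hk; apply: IH; apply: trmx_mul_eq0.
rewrite sym_exp // mulmxE -exprD.
have -> : (k.+1 + k.+1 = k.+2 + k)%N by rewrite addnS addSn.
by rewrite exprD Hk mul0r.
Qed.

Lemma prod_dvd_pow (s t : seq R) : {subset s <= t} ->
  \prod_(x <- s) ('X - x%:P) %| (\prod_(x <- t) ('X - x%:P)) ^+ (size s).
Proof.
elim: s => [|a s IH] Hs; first by rewrite big_nil dvd1p.
rewrite big_cons /= exprS; apply: dvdp_mul.
  by rewrite dvdp_XsubCl root_prod_XsubC; apply: Hs; rewrite inE eqxx.
by apply: IH => x xs; apply: Hs; rewrite inE xs orbT.
Qed.

Lemma char_poly_sim n (P A D : 'M[R]_n) : P \in unitmx -> P *m A = D *m P ->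
  char_poly A = char_poly D.
Proof.
move=> Pu HPA.
have HA : A = invmx P *m D *m P by rewrite -mulmxA -HPA mulmxA mulVmx // mul1mx.
set Q := map_mx polyC P; set Qi := map_mx polyC (invmx P).
have QQ : Qi *m Q = 1%:M by rewrite -map_mxM mulVmx // map_mx1.
have E : char_poly_mx A = Qi *m char_poly_mx D *m Q.
  rewrite /char_poly_mx mulmxBr mulmxBl HA !map_mxM -!mulmxA.
  by rewrite mul_scalar_mx -scalemxAr QQ scalemx1.
rewrite /char_poly E !det_mulmx mulrC mulrA -det_mulmx.
by rewrite -map_mxM mulmxV // map_mx1 det1 mul1r.
Qed.

End Aux.
Arguments dotrC {R n}. Arguments dotr_ge0 {R n}. Arguments dotr_eq0 {R n}. Arguments dotrE {R n}.
Arguments trmx_mul_eq0 {R n}.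

Lemma sym_diag (R : realType) n (A : 'M[R]_n.+1) (lam : seq R) : A^T = A ->
  char_poly A = \prod_(x <- lam) ('X - x%:P) ->
  exists P (dd : 'rV[R]_n.+1), [/\ P \in unitmx, P *m A = diag_mx dd *m P &
     perm_eq lam [seq dd 0 i | i <- enum 'I_n.+1]].
Proof.
move=> HA Hc.
set p := \prod_(x <- undup lam) ('X - x%:P).
have Hs : size lam = n.+1.
  by have := size_char_poly A; rewrite Hc size_prod_XsubC => -[].
have Hp : horner_mx A p = 0.
  apply: (@sym_nilp _ _ _ n); first exact: sym_horner.
  rewrite -rmorphXn /=.
  have : char_poly A %| p ^+ n.+1.
    by rewrite Hc -Hs; apply: prod_dvd_pow => x; rewrite mem_undup.
  by move=> /dvdpP [q ->]; rewrite rmorphM /= Cayley_Hamilton mulr0.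
have : diagonalizable A.
  apply/diagonalizableP; exists (undup lam); first exact: undup_uniq.
  exact: mxminpoly_min.
move=> [P Pu /similar_diagPex [D /(similarP Pu) HPD]].
exists P, D; split => //.
apply: prod_XsubC_eq.
rewrite -Hc (@char_poly_sim R _ _ _ _ Pu HPD) char_poly_trig ?diag_mx_is_trig //.
rewrite big_map big_enum /=; apply: eq_bigr => i _; rewrite mxE eqxx mulr1n.
by [].
Qed.

Section F1.
Context {R : realType}.

Lemma row_eig n (A P : 'M[R]_n) (dd : 'rV[R]_n) i :
  P *m A = diag_mx dd *m P -> row i P *m A = dd 0 i *: row i P.
Proof.
by move=> HPA; rewrite -row_mul HPA mul_diag_mx; apply/rowP => k; rewrite !mxE.
Qed.

Lemma dot_lin n (u v u' v' : 'rV[R]_n) c1 c2 a b :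
  ((c1 *: u + c2 *: v) *m (a *: u' + b *: v')^T) 0 0 =
  c1 * a * (u *m u'^T) 0 0 + c1 * b * (u *m v'^T) 0 0 +
  c2 * a * (v *m u'^T) 0 0 + c2 * b * (v *m v'^T) 0 0.
Proof.
rewrite !dotrE !mulr_sumr -!big_split /=; apply: eq_bigr => k _.
rewrite !mxE; ring.
Qed.

Lemma quad_two n (A P : 'M[R]_n) (dd : 'rV[R]_n) (i j : 'I_n) (a b : R) :
  A^T = A -> P *m A = diag_mx dd *m P -> dd 0 j <= dd 0 i ->
  dd 0 j * ((a *: row i P + b *: row j P) *m (a *: row i P + b *: row j P)^T) 0 0
  <= ((a *: row i P + b *: row j P) *m A *m (a *: row i P + b *: row j P)^T) 0 0.
Proof.
move=> HA HPA Hd.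
set pi := row i P; set pj := row j P.
have Ei : pi *m A = dd 0 i *: pi by apply: row_eig.
have Ej : pj *m A = dd 0 j *: pj by apply: row_eig.
have xA : (a *: pi + b *: pj) *m A = (a * dd 0 i) *: pi + (b * dd 0 j) *: pj.
  by rewrite mulmxDl -!scalemxAl Ei Ej !scalerA.
set g := (pi *m pj^T) 0 0.
have h1 : (pi *m A *m pj^T) 0 0 = dd 0 i * g by rewrite Ei -scalemxAl mxE.
have h2 : (pi *m A *m pj^T) 0 0 = dd 0 j * g.
  rewrite -mulmxA -[A in pi *m (A *m _)]HA -trmx_mul Ej linearZ /= -scalemxAr mxE.
  by [].
have Hg : g * (dd 0 i - dd 0 j) = 0 by rewrite mulrBr mulrC -h1 h2 mulrC subrr.
rewrite xA !dot_lin (dotrC pj pi) -/g.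
have ni := dotr_ge0 pi.
have H0 : 0 <= a * a * (pi *m pi^T) 0 0 * (dd 0 i - dd 0 j).
  by rewrite mulr_ge0 ?subr_ge0 // mulr_ge0 // -expr2 sqr_ge0.
move/eqP: Hg; rewrite mulf_eq0 => /orP [/eqP -> | ]; first by nra.
by rewrite subr_eq0 => /eqP ->; nra.
Qed.

Lemma F1 n (A P : 'M[R]_n) (dd : 'rV[R]_n) (i j : 'I_n) (c : R) :
  A^T = A -> P \in unitmx -> P *m A = diag_mx dd *m P -> i != j ->
  dd 0 j <= dd 0 i ->
  (forall x : 'rV_n, x *m (const_mx 1 : 'cV_n) = 0 ->
     (x *m A *m x^T) 0 0 <= c * (x *m x^T) 0 0) ->
  dd 0 j <= c.
Proof.
move=> HA Pu HPA ij Hd Hpsd.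
set o := (const_mx 1 : 'cV[R]_n).
set si := (row i P *m o) 0 0; set sj := (row j P *m o) 0 0.
pose ab := if (si == 0) && (sj == 0) then (1 : R, 0 : R) else (sj, - si).
set x := ab.1 *: row i P + ab.2 *: row j P.
have Ho : x *m o = 0.
  have E : (x *m o) 0 0 = ab.1 * si + ab.2 * sj.
    by rewrite /si /sj /x (mulmxDl (ab.1 *: row i P)) -!scalemxAl !mxE.
  apply/matrixP => r s; rewrite !ord1 E [RHS]mxE.
  rewrite /ab; case: ifP => [/andP[/eqP-> /eqP->]|_] /=; ring.
have Hx : x != 0.
  apply/eqP => H0.
  have : (ab.1 *: (delta_mx 0 i : 'rV[R]_n) + ab.2 *: (delta_mx 0 j : 'rV[R]_n)) *m P = 0.
    by rewrite mulmxDl -!scalemxAl -!rowE.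
  move=> /(congr1 (mulmx^~ (invmx P))); rewrite mulmxK // mul0mx => He.
  have e1 : ab.1 = 0.
    have := congr1 (fun M : 'rV[R]_n => M 0 i) He; rewrite !mxE !eqxx /=.
    by rewrite (negbTE ij) /= mulr1 mulr0 addr0.
  have e2 : ab.2 = 0.
    have := congr1 (fun M : 'rV[R]_n => M 0 j) He; rewrite !mxE !eqxx /=.
    by rewrite eq_sym (negbTE ij) /= mulr1 mulr0 add0r.
  move: e1 e2; rewrite /ab; case: ifP => [_ /= H1 _| Hn /= H1 H2].
    by move/eqP: H1; rewrite oner_eq0.
  have Hsi : si = 0 by rewrite -[si]opprK H2 oppr0.
  by move/negbT: Hn; rewrite Hsi H1 eqxx.
have npos : 0 < (x *m x^T) 0 0.
  rewrite lt_def dotr_ge0 andbT; apply/eqP => /dotr_eq0 H; by rewrite H eqxx in Hx.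
have h1 := @quad_two n A P dd i j ab.1 ab.2 HA HPA Hd.
have h2 := Hpsd x Ho.
rewrite -/x in h1.
by rewrite -(ler_pM2r npos); apply: le_trans h1 h2.
Qed.

End F1.

Section F2.
Context {R : realType}.

Lemma entry_sub m n (M N : 'M[R]_(m, n)) i j : (M - N) i j = M i j - N i j.
Proof. by rewrite !mxE. Qed.

Lemma entry_scale m n (M : 'M[R]_(m, n)) (c : R) i j : (c *: M) i j = c * M i j.
Proof. by rewrite !mxE. Qed.

Lemma F2 n (A P : 'M[R]_n) (dd : 'rV[R]_n) (i : 'I_n) (c : R) (x : 'rV[R]_n) :
  A^T = A -> P \in unitmx -> P *m A = diag_mx dd *m P ->
  (forall j, dd 0 j <= c) -> (forall j, dd 0 j = c -> j = i) ->
  c * (x *m x^T) 0 0 <= (x *m A *m x^T) 0 0 ->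
  x = (x *m invmx P) 0 i *: row i P.
Proof.
move=> HA Pu HPA Hle Hu Hx.
set a := x *m invmx P.
have xa : x = a *m P by rewrite /a mulmxKV.
set G := P *m P^T.
have DGsym : (diag_mx dd *m G)^T = diag_mx dd *m G.
  by rewrite /G mulmxA -HPA !trmx_mul trmxK HA mulmxA.
have Gsym : G^T = G by rewrite /G trmx_mul trmxK.
set s := \row_j Num.sqrt (c - dd 0 j).
set y := a *m diag_mx s *m P.
have e1 : x *m x^T = a *m G *m a^T by rewrite xa trmx_mul !mulmxA.
have e2 : x *m A *m x^T = a *m (diag_mx dd *m G) *m a^T.
  by rewrite xa trmx_mul -!mulmxA (mulmxA P A) HPA /G !mulmxA.
have e3 : y *m y^T = a *m (diag_mx s *m G *m diag_mx s) *m a^T.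
  by rewrite /y !trmx_mul tr_diag_mx /G !mulmxA.
clearbody G.
have Hcomm : forall j k, dd 0 j * G j k = dd 0 k * G j k.
  move=> j k; have := congr1 (fun M : 'M_n => M k j) DGsym.
  rewrite mul_diag_mx !mxE => ->.
  by have := congr1 (fun M : 'M_n => M j k) Gsym; rewrite mxE => ->.
have HS : c *: G - diag_mx dd *m G = diag_mx s *m G *m diag_mx s.
  apply/matrixP => j k; rewrite mul_mx_diag !mul_diag_mx !mxE.
  have [->|nz] := eqVneq (G j k) 0; first by rewrite !(mulr0, mul0r) subr0.
  have Hjk : dd 0 j = dd 0 k.
    by apply: (mulIf nz); apply: Hcomm.
  rewrite Hjk mulrAC -expr2 sqr_sqrtr ?subr_ge0 //; ring.
have Hq : c * (x *m x^T) 0 0 - (x *m A *m x^T) 0 0 = (y *m y^T) 0 0.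
  rewrite e3 -HS mulmxBr mulmxBl entry_sub -scalemxAr -scalemxAl entry_scale.
  by rewrite e1 e2.
have Hy : y = 0.
  apply: dotr_eq0; apply/le_anti; rewrite dotr_ge0 andbT -Hq subr_le0 Hx.
  by [].
have HaS : a *m diag_mx s = 0.
  by move: Hy; rewrite /y => /(congr1 (mulmx^~ (invmx P))); rewrite mulmxK // mul0mx.
have Ha : forall j, j != i -> a 0 j = 0.
  move=> j ji; have := congr1 (fun M : 'rV_n => M 0 j) HaS.
  rewrite mul_mx_diag !mxE => /eqP; rewrite mulf_eq0 => /orP [/eqP //|].
  rewrite sqrtr_eq0 subr_le0 => Hc.
  have Hj : dd 0 j = c by apply/le_anti; rewrite Hc Hle.
  by move: ji; rewrite (Hu j Hj) eqxx.
rewrite {1}xa mulmx_sum_row (bigD1 i) //= big1 ?addr0 // => j ji.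
by rewrite Ha // scale0r.
Qed.

End F2.

Section Count.
Context {R : realType}.

Lemma cnt_card n (a : pred 'I_n) : count a (enum 'I_n) = #|a|.
Proof. by rewrite cardE /enum_mem size_filter (@eq_filter _ _ predT) // filter_predT. Qed.

Lemma two_idx n (f : 'I_n -> R) (p : pred R) :
  (2 <= count p [seq f i | i <- enum 'I_n])%N ->
  exists i j, [/\ i != j, p (f i) & p (f j)].
Proof.
rewrite count_map cnt_card => H2.
have /card_gt0P [i Hi] : (0 < #|preim f p|)%N by apply: leq_trans H2.
move: H2; rewrite (cardD1 i) Hi add1n ltnS => /card_gt0P [j Hj].
move: Hj; rewrite !inE => /andP [ji Hj].
by exists i, j; split => //; rewrite eq_sym.
Qed.

Lemma two_le_count n (f : 'I_n -> R) (p : pred R) i j :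
  i != j -> p (f i) -> p (f j) -> (2 <= count p [seq f k | k <- enum 'I_n])%N.
Proof.
move=> ij Hi Hj; rewrite count_map cnt_card (cardD1 i) inE Hi add1n ltnS.
by apply/card_gt0P; exists j; rewrite !inE eq_sym ij.
Qed.

Lemma quadE n (A : 'M[R]_n) (x : 'rV[R]_n) :
  (x *m A *m x^T) 0 0 = \sum_l \sum_k x 0 k * A k l * x 0 l.
Proof.
rewrite mxE; apply: eq_bigr => l _; rewrite !mxE mulr_suml.
by apply: eq_bigr => k _.
Qed.

End Count.

Arguments F1 {R n A P dd i j c}.
Arguments F2 {R n A P dd i c x}.

Theorem lemma4p4 (R : realType) (d : nat) (e : rel 'I_(d.+2))
  (lam : seq R) (k : R) :
  simple_graph e ->
  eigenvalues_desc (adjmx R e) lam ->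
  1 < k ->
  let B := ((k ^+ 2 - 1)^-1)%:M - adjmx R e in
  (forall w : 'cV[R]_(d.+2), orth_ones w -> 0 <= (w^T *m B *m w) 0 0) ->
  (exists w : 'cV[R]_(d.+2), [/\ w != 0, orth_ones w &
      exists gamma : R, B *m w = gamma *: ones R d.+2]) ->
  \det B = 0 ->
  exists v2 : 'cV[R]_(d.+2),
    [/\ v2 != 0, adjmx R e *m v2 = lam`_1 *: v2 & orth_ones v2].
Proof.
move=> [Hsym Hirr] [Hsort Hchar] Hk B Hpsd [w [wnz worth [g Hg]]] HdetB.
subst B.
set A := adjmx R e in Hchar Hg HdetB Hpsd *.
set c := (k ^+ 2 - 1)^-1 in Hpsd Hg HdetB *.
set B := c%:M - A in Hpsd Hg HdetB *.
have HA : A^T = A by apply/matrixP => i j; rewrite !mxE Hsym.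
have HAnn : forall i j, 0 <= A i j by move=> i j; rewrite mxE ler0n.
have HBsym : B^T = B by rewrite /B linearB /= tr_scalar_mx HA.
have Heig : forall z : 'cV[R]_(d.+2), B *m z = 0 -> A *m z = c *: z.
  move=> z; rewrite /B mulmxBl mul_scalar_mx => /eqP; rewrite subr_eq0 => /eqP.
  by move=> ->.
have [u [unz uorth uA]] : exists u : 'cV[R]_(d.+2),
    [/\ u != 0, orth_ones u & A *m u = c *: u].
  have /det0P [v vnz vB] : \det B == 0 by apply/eqP.
  have Bv : B *m v^T = 0 by rewrite -HBsym -trmx_mul vB trmx0.
  have [g0|gnz] := eqVneq g 0.
    by exists w; split => //; apply: Heig; rewrite Hg g0 scale0r.
  exists v^T; split; first by rewrite trmx_eq0.
    have : v *m (B *m w) = 0 by rewrite mulmxA vB mul0mx.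
    rewrite Hg -scalemxAr => /eqP; rewrite scaler_eq0 (negbTE gnz) /= => /eqP H.
    by rewrite /orth_ones -trmx_mul H trmx0.
  exact: Heig.
have Hpsd' : forall x : 'rV[R]_(d.+2), x *m (const_mx 1 : 'cV_(d.+2)) = 0 ->
    (x *m A *m x^T) 0 0 <= c * (x *m x^T) 0 0.
  move=> x Hx.
  have H : orth_ones x^T by rewrite /orth_ones /ones -trmx_mul Hx trmx0.
  have := Hpsd _ H.
  rewrite trmxK /B mulmxBr mulmxBl entry_sub mul_mx_scalar -scalemxAl entry_scale.
  by rewrite subr_ge0.
have [P [dd [Pu HPA Hperm]]] := @sym_diag R _ A _ HA Hchar.
have Hs : size lam = d.+2.
  by have := size_char_poly A; rewrite Hchar size_prod_XsubC => -[].
case: lam Hsort Hchar Hperm Hs => [|l0 [|l1 rest]] // Hsort Hchar Hperm Hs.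
rewrite /=.
move: Hsort => /= /andP [Hl10 Hpath].
have Hrest : all (fun x => x <= l1) rest.
  have Htr : transitive (>=%R : rel R) by move=> a b c' h1 h2; exact: le_trans h2 h1.
  exact: (order_path_min Htr Hpath).
have Hl1c : l1 <= c.
  have : (2 <= count (fun x : R => (l1 <= x)%R) [seq (dd 0 i)%R | i <- enum 'I_(d.+2)])%N.
    by rewrite -(permP Hperm) /= Hl10 lexx.
  move/two_idx => [i [j [ij Hi Hj]]].
  have [hle|hlt] := leP (dd 0 j) (dd 0 i).
    exact: le_trans Hj (F1 HA Pu HPA ij hle Hpsd').
  by apply: le_trans Hi (F1 HA Pu HPA _ (ltW hlt) Hpsd'); rewrite eq_sym.
have Hc : c \in l0 :: l1 :: rest.
  rewrite -root_prod_XsubC -Hchar -eigenvalue_root_char.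
  apply/eigenvalueP; exists u^T; last by rewrite trmx_eq0.
  by rewrite -{1}HA -trmx_mul uA linearZ.
have [Heq|Hne] := eqVneq l1 c.
  by exists u; split => //; rewrite Heq.
exfalso.
have Hl1lt : l1 < c by rewrite lt_neqAle Hne Hl1c.
have Hc0 : c = l0.
  move: Hc; rewrite !inE => /orP [/eqP //|/orP [/eqP H|Hr]].
    by rewrite H eqxx in Hne.
  by have := allP Hrest _ Hr; rewrite leNgt Hl1lt.
have Hle : forall j, dd 0 j <= c.
  move=> j; have : dd 0 j \in l0 :: l1 :: rest.
    by rewrite (perm_mem Hperm); apply: map_f; rewrite mem_enum.
  rewrite !inE Hc0 => /orP [/eqP-> //|/orP [/eqP-> //|Hr]].
  exact: le_trans (allP Hrest _ Hr) Hl10.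
have [i Hi] : exists i, dd 0 i = c.
  have : c \in [seq dd 0 i | i <- enum 'I_(d.+2)] by rewrite -(perm_mem Hperm).
  by move/mapP => [i _ ->]; exists i.
have Hcnt : count (fun x => c <= x) rest = 0%N.
  apply/eqP; rewrite -leqn0 leqNgt -has_count; apply/hasPn => x xr.
  by rewrite -ltNge; exact: le_lt_trans (allP Hrest x xr) Hl1lt.
have Hu : forall j, dd 0 j = c -> j = i.
  move=> j Hj; apply/eqP; apply/negPn/negP => ji.
  have := @two_le_count R _ (fun k => dd 0 k) (fun x => c <= x) _ _ ji.
  rewrite /= Hj Hi lexx => /(_ isT isT).
  by rewrite -(permP Hperm) /= Hcnt Hc0 lexx (leNgt l0 l1) -Hc0 Hl1lt.
set ur := u^T.
set xr := map_mx (fun r => `|r|) ur.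
have Hur : (ur *m A *m ur^T) 0 0 = c * (ur *m ur^T) 0 0.
  by rewrite /ur -{1}HA -trmx_mul uA linearZ /= -scalemxAl entry_scale.
have Hnorm : (xr *m xr^T) 0 0 = (ur *m ur^T) 0 0.
  rewrite !dotrE; apply: eq_bigr => k' _; rewrite mxE -normrM ger0_norm //.
  by rewrite -expr2 sqr_ge0.
have Hquad : (ur *m A *m ur^T) 0 0 <= (xr *m A *m xr^T) 0 0.
  rewrite !quadE; apply: ler_sum => l _; apply: ler_sum => k' _.
  have h1 := ler_norm (ur 0 k' * ur 0 l); have h2 := HAnn k' l.
  rewrite normrM in h1; rewrite !mxE in h1 h2 *.
  by nra.
have Hx1 : c * (xr *m xr^T) 0 0 <= (xr *m A *m xr^T) 0 0 by rewrite Hnorm -Hur.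
have Hu1 : c * (ur *m ur^T) 0 0 <= (ur *m A *m ur^T) 0 0 by rewrite Hur.
have Ex := F2 HA Pu HPA Hle Hu Hx1.
have Eu := F2 HA Pu HPA Hle Hu Hu1.
set s := (xr *m invmx P) 0 i in Ex; set t := (ur *m invmx P) 0 i in Eu.
have urnz : ur != 0 by rewrite trmx_eq0.
have tnz : t != 0 by apply: contraNneq urnz => t0; rewrite Eu t0 scale0r.
have Exu : xr = (s / t) *: ur by rewrite [in RHS]Eu scalerA divfK.
have Hsu : \sum_k' ur 0 k' = 0.
  have : (ur *m (const_mx 1 : 'cV_(d.+2))) 0 0 = 0.
    by rewrite /ur -[const_mx 1]trmxK -trmx_mul; move: uorth; rewrite /orth_ones /ones => ->; rewrite !mxE.
  move=> H; transitivity ((ur *m (const_mx 1 : 'cV_(d.+2))) 0 0); last exact: H.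
  rewrite [RHS]mxE; apply: eq_bigr => k' _; by rewrite [const_mx _ _ _]mxE mulr1.
have Hsx : \sum_k' xr 0 k' = 0.
  have -> : \sum_k' xr 0 k' = \sum_k' (s / t * ur 0 k').
    by apply: eq_bigr => k' _; rewrite Exu entry_scale.
  by rewrite -mulr_sumr Hsu mulr0.
have Hnn : forall k'', true -> 0 <= xr 0 k'' by move=> k'' _; rewrite mxE normr_ge0.
have Hz : forall k', xr 0 k' = 0.
  move=> k'; have := @psumr_eq0P _ _ xpredT (fun k => xr 0 k) Hnn Hsx k'. by apply.
move/negP: urnz; apply; apply/eqP/rowP => k'.
have := Hz k'; rewrite /xr [map_mx _ _ _ _]mxE => /eqP; rewrite normr_eq0 => /eqP ->.
by rewrite mxE.
Qed.
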